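(* Let $S_0$ be the equivalence relation on $\mathcal M$ whose classes are the hyperplanes $\Sigma_t$, $t\in\mathbb R$; that is, $S_0((t,\vec x),(t',\vec x'))\iff t=t'$. Then: (a) $S_0$ is a non-trivial $\mathtt{IGal}$-invariant equivalence relation. It is the unique non-trivial $\mathtt{IGal}$-invariant equivalence relation $S$ on $\mathcal M$ such that every equivalence class of $S$ meets every Galilean worldline in at most one point. Here a Galilean worldline is the graph $\{(t,\vec x(t)):t\in I\}$ of a piecewise differentiable map $\vec x:I\to\mathbb R^3$ defined on an interval $I\subseteq\mathbb R$. (b) $S_0$ is also the unique non-trivial $\mathtt{IGal}$-invariant equivalence relation on $\mathcal M$ all of whose equivalence classes are connected subsets of $\mathbb R^4$.
   Context: Spacetime is $\mathcal M=\mathbb R^4$, with points written $(t,\vec x)$, $t\in\mathbb R$, $\vec x\in\mathbb R^3$. For $t\in\mathbb R$ let $\Sigma_t:=\{(t,\vec x):\vec x\in\mathbb R^3\}$. $\mathtt{IGal}$ is the group of bijections of $\mathbb R^4$ of the form $(t,\vec x)\mapsto(t+b,\;R\vec x+\vec v\,t+\vec a)$ with $R\in\mathtt{SO}(3)$, $\vec v,\vec a\in\mathbb R^3$ and $b\in\mathbb R$. An equivalence relation $S$ on $\mathcal M$ is $G$-invariant if $S(p,q)\Leftrightarrow S(g\cdot p,g\cdot q)$ for all $g\in G$ and all $p,q$. It is non-trivial if it is neither the one-class relation (single class $\mathcal M$) nor the equality relation (all classes singletons). *)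

(* Defs.v *)
From HB Require Import structures.
From mathcomp Require Import all_boot all_order all_algebra.
From mathcomp Require Import all_classical all_reals all_analysis.
Set Implicit Arguments. Unset Strict Implicit. Unset Printing Implicit Defensive.
Import Order.TTheory GRing.Theory Num.Theory.
Import numFieldNormedType.Exports.
Local Open Scope classical_set_scope.
Local Open Scope ring_scope.

Section Galilei.
Variable R : realType.

Definition stpoint := (R * 'cV[R]_3)%type.

Definition SO3 (Q : 'M[R]_3) : Prop := Q^T *m Q = 1%:M /\ \det Q = 1.

Definition igal_act (Q : 'M[R]_3) (v a : 'cV[R]_3) (b : R) (p : stpoint) : stpoint :=
  (p.1 + b, Q *m p.2 + p.1 *: v + a).

Definition is_equivalence (S : stpoint -> stpoint -> Prop) : Prop :=
  (forall p, S p p) /\ (forall p q, S p q -> S q p) /\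
  (forall p q r, S p q -> S q r -> S p r).

Definition nontrivial (S : stpoint -> stpoint -> Prop) : Prop :=
  ~ (forall p q, S p q) /\ ~ (forall p q, S p q -> p = q).

Definition IGal_invariant (S : stpoint -> stpoint -> Prop) : Prop :=
  forall Q v a b, SO3 Q -> forall p q, S p q <-> S (igal_act Q v a b p) (igal_act Q v a b q).

Definition eqclass (S : stpoint -> stpoint -> Prop) (p : stpoint) : set stpoint := [set q | S p q].

Definition S0 (p q : stpoint) : Prop := p.1 = q.1.

Definition is_interval (I : set R) : Prop :=
  forall a b c, I a -> I b -> a <= c -> c <= b -> I c.

Definition piecewise_differentiable (I : set R) (f : R -> 'cV[R]_3) : Prop :=
  {within I, continuous f} /\
  forall a b, I a -> I b ->
    exists s : seq R, forall t, a < t -> t < b -> t \notin s -> derivable f t 1.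

Definition galilean_worldline (W : set stpoint) : Prop :=
  exists (I : set R) (f : R -> 'cV[R]_3),
    is_interval I /\ piecewise_differentiable I f /\ W = [set (t, f t) | t in I].

Definition classes_meet_worldlines_at_most_once (S : stpoint -> stpoint -> Prop) : Prop :=
  forall W, galilean_worldline W ->
    forall p q r, eqclass S p q -> eqclass S p r -> W q -> W r -> q = r.

Definition classes_connected (S : stpoint -> stpoint -> Prop) : Prop :=
  forall p, connected (eqclass S p).

Definition same_relation (S T : stpoint -> stpoint -> Prop) : Prop :=
  forall p q, S p q <-> T p q.

End Galilei.

(* Main.v *)
Require Import Defs.
From HB Require Import structures.
From mathcomp Require Import all_boot all_order all_algebra.
From mathcomp Require Import all_classical all_reals all_analysis.
From mathcomp Require Import ring lra.
Import Order.TTheory GRing.Theory Num.Theory.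
Import numFieldNormedType.Exports.
Local Open Scope classical_set_scope.
Local Open Scope ring_scope.

Lemma det33 (R : comNzRingType) (A : 'M[R]_3) : \det A =
  A 0 0 * (A 1 1 * A 2 2 - A 1 2 * A 2 1) - A 0 1 * (A 1 0 * A 2 2 - A 1 2 * A 2 0)
  + A 0 2 * (A 1 0 * A 2 1 - A 1 1 * A 2 0).
Proof.
rewrite !(expand_det_row _ ord0) /cofactor !big_ord_recl !big_ord0 /=.
rewrite !(expand_det_row _ ord0) /cofactor !big_ord_recl !big_ord0 /=.
rewrite !(expand_det_row _ ord0) /cofactor !big_ord_recl !big_ord0 /=.
rewrite !det_mx00 !mxE /=.
pose f (i j : nat) := A (inord i) (inord j).
have Af : forall i j : 'I_3, A i j = f i j by move=> i j; rewrite /f !inord_val.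
rewrite !Af /=. clearbody f.
rewrite /bump /= ?(addn0, add0n, addn1, add1n) /=.
have h1 : (1 %% 3 = 1)%N := erefl. have h2: ((1 %% 3 + 1 %% 3) %% 3 = 2)%N := erefl.
rewrite h2 h1. ring.
Qed.

Set Implicit Arguments. Unset Strict Implicit.
Section Mx.
Context (R : realType).

Definition col3 (x y z : R) : 'cV[R]_3 :=
  \col_(i < 3) (match nat_of_ord i with O => x | S O => y | _ => z end).

Definition Rab (a b : R) : 'M[R]_3 :=
  \matrix_(i < 3, j < 3) (match nat_of_ord i, nat_of_ord j with
   | O, O => a | O, S O => - b | S O, O => b | S O, S O => a | S (S O), S (S O) => 1 | _, _ => 0 end).

Definition Pm : 'M[R]_3 :=
  \matrix_(i < 3, j < 3) (match nat_of_ord i, nat_of_ord j with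
   | O, S O => 1 | S O, S (S O) => 1 | S (S O), O => 1 | _, _ => 0 end).

Ltac ord3 i := let Hi := fresh in case: i => [[|[|[|?]]] Hi] //=.

Lemma col3E (w : 'cV[R]_3) : w = col3 (w 0 0) (w 1 0) (w 2 0).
Proof.
apply/matrixP => i j; rewrite !mxE (ord1 j).
by ord3 i; congr (w _ _); apply/val_inj.
Qed.

Lemma col3D x y z x' y' z' : col3 x y z + col3 x' y' z' = col3 (x+x') (y+y') (z+z').
Proof. by apply/matrixP => i j; rewrite !mxE; ord3 i. Qed.

Lemma col3_0 : col3 0 0 0 = 0.
Proof. by apply/matrixP => i j; rewrite !mxE; ord3 i. Qed.

Lemma col3Mn x y z n : col3 x y z *+ n = col3 (x *+ n) (y *+ n) (z *+ n).
Proof.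
elim: n => [|n IH]; first by rewrite !mulr0n col3_0.
by rewrite !mulrS IH col3D.
Qed.

Lemma mulRab a b x y z : Rab a b *m col3 x y z = col3 (a*x - b*y) (b*x + a*y) z.
Proof.
apply/matrixP => i j; rewrite !mxE !big_ord_recl big_ord0 !mxE /=.
ord3 i; ring.
Qed.

Lemma mulPm x y z : Pm *m col3 x y z = col3 y z x.
Proof.
apply/matrixP => i j; rewrite !mxE !big_ord_recl big_ord0 !mxE /=.
ord3 i; ring.
Qed.

Lemma SO3_Rab a b : a * a + b * b = 1 -> SO3 (Rab a b).
Proof.
move=> h; split; last first.
  by rewrite det33 !mxE /=; transitivity (a*a+b*b); [ring|exact h].
apply/matrixP => i j; rewrite !mxE !big_ord_recl big_ord0 !mxE /=.
ord3 i; ord3 j; rewrite /=; first [ring | (transitivity (a*a+b*b); [ring|exact h])].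
Qed.

Lemma SO3_Pm : SO3 Pm.
Proof.
split; last by rewrite det33 !mxE /=; ring.
apply/matrixP => i j; rewrite !mxE !big_ord_recl big_ord0 !mxE /=.
by ord3 i; ord3 j; rewrite /=; ring.
Qed.

End Mx.
Arguments Pm {R}.

Set Implicit Arguments. Unset Strict Implicit.
Section Main.
Context (R : realType).
Implicit Types (S : stpoint R -> stpoint R -> Prop).

Lemma SO3_1 : SO3 (1%:M : 'M[R]_3).
Proof. by split; [rewrite trmx1 mulmx1 | rewrite det1]. Qed.

Lemma inv_shift S : IGal_invariant S -> forall p q a b,
  S p q <-> S (p.1 + b, p.2 + a) (q.1 + b, q.2 + a).
Proof.
move=> HI p q a b; have := HI 1%:M 0 a b SO3_1 p q.
by rewrite /igal_act !mul1mx !scaler0 !addr0.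
Qed.

Lemma inv_boost S : IGal_invariant S -> forall p q v,
  S p q <-> S (p.1, p.2 + p.1 *: v) (q.1, q.2 + q.1 *: v).
Proof.
move=> HI p q v; have := HI 1%:M v 0 0 SO3_1 p q.
by rewrite /igal_act !mul1mx !addr0.
Qed.

Lemma inv_rot S : IGal_invariant S -> forall Q p q, SO3 Q ->
  S p q <-> S (p.1, Q *m p.2) (q.1, Q *m q.2).
Proof.
move=> HI Q p q HQ; have := HI Q 0 0 0 HQ p q.
by rewrite /igal_act !scaler0 !addr0.
Qed.

Definition D S (w : 'cV[R]_3) := S (0, 0) (0, w).

Lemma same_time S : IGal_invariant S -> forall t x y,
  S (t, x) (t, y) <-> D S (y - x).
Proof.
move=> HI t x y; rewrite /D (inv_shift HI (0, 0) (0, y - x) x t) /=.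
by rewrite !add0r subrK.
Qed.

Lemma col3N (x y z : R) : - col3 x y z = col3 (- x) (- y) (- z).
Proof.
by apply/matrixP => i j; rewrite !mxE; case: i => [[|[|[|?]]] Hi].
Qed.

Lemma archi_fill (P : R -> Prop) (c : R) : 0 < c -> P 0 ->
  (forall x y, P x -> P y -> P (x + y)) -> (forall s, `|s| <= c -> P s) ->
  forall s, P s.
Proof.
move=> c0 P0 PD Pb s.
have h0 : 0 <= `|s| / c by rewrite divr_ge0 // ltW.
have hn := archi_boundP h0.
set n := Num.Def.archi_bound (`|s| / c) in hn.
have n0 : (0 < n)%N.
  by rewrite lt0n; apply/eqP => n0; move: hn; rewrite n0 ltNge h0.
have nR : 0 < n%:R :> R by rewrite ltr0n.
pose u := s / n%:R.
have Pu : P u.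
  apply: Pb; rewrite /u normrM normfV (gtr0_norm nR) ler_pdivrMr //.
  by rewrite -ler_pdivrMl // mulrC ltW.
have Pn k : P (u *+ k).
  by elim: k => [|k IH]; [rewrite mulr0n | rewrite mulrS; apply: PD].
by have := Pn n; rewrite /u -mulr_natr divfK // lt0r_neq0.
Qed.

Lemma Dall S : is_equivalence S -> IGal_invariant S ->
  forall d, d != 0 -> D S d -> forall w, D S w.
Proof.
move=> [Hr [Hs Ht]] HI d dn0 Dd.
have Drot Q w : SO3 Q -> D S w -> D S (Q *m w).
  by move=> HQ; rewrite /D (inv_rot HI (0, 0) (0, w) HQ) /= mulmx0.
have Dadd u w : D S u -> D S w -> D S (u + w).
  move=> Du Dw; apply: Ht Du _; apply/(same_time HI).
  by rewrite addrAC subrr add0r.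
have DN w : D S w -> D S (- w).
  by move=> Dw; have := (same_time HI 0 w 0).1 (Hs _ _ Dw); rewrite sub0r.
have D0 : D S 0 by apply: Hr.
have key x y z : D S (col3 x y z) -> D S (col3 0 0 (z + z)).
  move=> h.
  have := Dadd _ _ h (Drot _ _ (SO3_Rab (a:=-1) (b:=0) ltac:(ring)) h).
  rewrite mulRab col3D.
  by have -> : col3 (x + (-1 * x - 0 * y)) (y + (0 * x + -1 * y)) (z + z) = col3 0 0 (z + z)
    by congr col3; ring.
have perm x y z : D S (col3 x y z) -> D S (col3 y z x).
  by move=> h; rewrite -mulPm; apply: Drot => //; exact: SO3_Pm.
have [c [c0 Dc]] : exists c, 0 < c /\ D S (col3 c 0 0).
  have [c [cn0 Dc]] : exists c, c != 0 /\ D S (col3 0 0 c).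
    move: Dd dn0; rewrite (col3E d).
    set d1 := d 0 0; set d2 := d 1 0; set d3 := d 2 0 => Dd dn0.
    have nz (e : R) : e != 0 -> e + e != 0 by move=> en; rewrite -mulr2n mulrn_eq0 negb_or en.
    have [e1|e1] := eqVneq d1 0; last by exists (d1 + d1); split; [exact: nz|
      exact: key (perm _ _ _ Dd)].
    have [e2|e2] := eqVneq d2 0; last by exists (d2 + d2); split; [exact: nz|
      exact: key (perm _ _ _ (perm _ _ _ Dd))].
    have [e3|e3] := eqVneq d3 0; last by exists (d3 + d3); split; [exact: nz|
      exact: key Dd].
    by move: dn0; rewrite e1 e2 e3 col3_0 eqxx.
  have Dc' : D S (col3 c 0 0) by apply: perm (perm _ _ _ Dc).
  have [cge0|clt0] := leP 0 c.
    by exists c; split => //; rewrite lt0r cn0.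
  exists (- c); split; first by rewrite oppr_gt0.
  by have := DN _ Dc'; rewrite col3N oppr0.
have Dx : forall s, D S (col3 s 0 0).
  have base s : `|s| <= c -> D S (col3 s 0 0).
    move=> hs.
    pose a := s / (c *+ 2).
    have c2 : 0 < c *+ 2 by rewrite pmulrn_rgt0.
    have ha : `|a| <= 1.
      rewrite /a normrM normfV (gtr0_norm c2) ler_pdivrMr // mul1r.
      by rewrite mulr2n; lra.
    move: ha; rewrite ler_norml => /andP[ha1 ha2].
    have h1 : 0 <= 1 - a * a by nra.
    pose b := Num.sqrt (1 - a * a).
    have hb : a * a + b * b = 1.
      by rewrite /b -(expr2 (Num.sqrt _)) sqr_sqrtr // addrC subrK.
    have hb' : a * a + (- b) * (- b) = 1 by rewrite mulrNN.
    have := Dadd _ _ (Drot _ _ (SO3_Rab hb) Dc) (Drot _ _ (SO3_Rab hb') Dc).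
    rewrite !mulRab col3D.
    have -> : a * c - b * 0 + (a * c - - b * 0) = s.
      by rewrite /a mulr2n; field; rewrite -mulr2n; apply/lt0r_neq0.
    have -> : b * c + a * 0 + (- b * c + a * 0) = 0 by ring.
    by rewrite addr0.
  apply: (archi_fill (c := c)) => //.
    by rewrite col3_0.
  by move=> x y Px Py; have := Dadd _ _ Px Py; rewrite col3D !addr0.
move=> w; rewrite (col3E w).
have -> : col3 (w 0 0) (w 1 0) (w 2 0) =
  col3 (w 0 0) 0 0 + col3 0 (w 1 0) 0 + col3 0 0 (w 2 0).
  by rewrite !col3D !addr0 !add0r.
apply: (Dadd); [apply: (Dadd)|].
- exact: Dx.
- exact: perm (perm _ _ _ (Dx _)).
- exact: perm (Dx _).
Qed.

Lemma from_sub S : is_equivalence S -> nontrivial S -> IGal_invariant S ->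
  (forall p q, S p q -> p.1 = q.1) -> same_relation S (@S0 R).
Proof.
move=> HE [_ Hnt] HI Hsub [t x] [t' y]; split; first exact: Hsub.
rewrite /S0 /= => <-.
have [[[t0 x0] [[t0' y0] [Hs Hne]]]|Hn] :=
  pselect (exists p q, S p q /\ p <> q); last first.
  exfalso; apply: Hnt => p q Hpq; apply: contrapT => Hne.
  by apply: Hn; exists p, q.
have et := Hsub _ _ Hs; rewrite /= in et; subst t0'.
have dn0 : y0 - x0 != 0.
  by rewrite subr_eq0; apply/eqP => e; apply: Hne; rewrite e.
have Dd : D S (y0 - x0).
  exact: ((same_time HI t0 x0 y0).1 Hs).
apply/(same_time HI). exact: (Dall HE HI dn0 Dd).
Qed.

Lemma worldline_sub S : is_equivalence S ->
  classes_meet_worldlines_at_most_once S -> forall p q, S p q -> p.1 = q.1.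
Proof.
move=> [Hr _] HW p q Hpq; apply: contrapT => hne.
have hn : q.1 - p.1 != 0 by rewrite subr_eq0; apply/eqP => e; apply: hne.
pose k := (q.1 - p.1)^-1 *: (q.2 - p.2).
pose c := p.2 - p.1 *: k.
pose f := fun t : R => t *: k + c.
have df t : derivable f t 1.
  apply/derivable1_diffP.
  apply: (@differentiableD _ _ _ (fun t : R => t *: k) (cst c)); last first.
    exact: differentiable_cst.
  by apply: differentiableZl.
have Wl : galilean_worldline [set (t, f t) | t in [set: R]].
  exists [set: R], f; split; first by [].
  split => //; split.
    apply: continuous_subspaceT => t.
    by apply: differentiable_continuous; apply/derivable1_diffP.
  by move=> a b _ _; exists [::] => t _ _ _.
have Wp : [set (t, f t) | t in [set: R]] p.
  exists p.1 => //; rewrite /f /c addrC subrK; by case: p {hn hne Hpq k c f df Wl}.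
have Wq : [set (t, f t) | t in [set: R]] q.
  exists q.1 => //; rewrite /f /c addrCA -scalerBl /k scalerA mulfV //.
  by rewrite scale1r addrC subrK; case: q {hn hne Hpq k c f df Wl Wp}.
have := HW _ Wl p p q (Hr p) Hpq Wp Wq.
by move=> e; apply: hne; rewrite e.
Qed.

Lemma connected_sub S : is_equivalence S -> nontrivial S -> IGal_invariant S ->
  classes_connected S -> forall p q, S p q -> p.1 = q.1.
Proof.
move=> [Hr [Hs Ht]] [Hall _] HI HC p q Hpq; apply: contrapT => hne.
pose G s := forall w, S (0, 0) (s, w).
have Gi tau w : tau != 0 -> S (0, 0) (tau, w) -> G tau.
  move=> tn h w'.
  have := (inv_boost HI (0, 0) (tau, w) (tau^-1 *: (w' - w))).1 h.
  by rewrite /= scale0r addr0 scalerA mulfV // scale1r addrC subrK.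
have GD a b : G a -> G b -> G (a + b).
  move=> Ga Gb w; apply: Ht (Ga 0) _.
  have := (inv_shift HI (0, 0) (b, w) 0 a).1 (Gb w).
  by rewrite /= !add0r !addr0 (addrC b a).
have GN a : G a -> G (- a).
  move=> Ga w.
  have := (inv_shift HI (a, - w) (0, 0) w (- a)).1 (Hs _ _ (Ga (- w))).
  by rewrite /= subrr addNr !add0r.
have tn : q.1 - p.1 != 0 by rewrite subr_eq0; apply/eqP => e; apply: hne.
have Gtau : G (q.1 - p.1).
  apply: (Gi _ (q.2 - p.2) tn).
  have := (inv_shift HI p q (- p.2) (- p.1)).1 Hpq.
  by rewrite !subrr.
set tau := q.1 - p.1 in tn Gtau.
have G0 : G 0 by have := GD _ _ Gtau (GN _ Gtau); rewrite subrr.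
have Gabs : G `|tau|.
  have [t0|t0] := leP 0 tau; first by rewrite ger0_norm.
  by rewrite ltr0_norm //; apply: GN.
have Hint s : 0 <= s -> s <= `|tau| -> G s.
  move=> s0 s1; have [->|sn0] := eqVneq s 0; first exact: G0.
  have conn := HC (0, 0).
  have := connected_continuous_connected (f := fst) conn.
  have cf : {within eqclass S (0, 0), continuous (@fst R 'cV[R]_3)}.
    by apply: continuous_subspaceT => x; exact: cvg_fst.
  move/(_ cf)/connected_intervalP => I.
  have : (fst @` eqclass S (0, 0)) s.
    apply: (I 0 `|tau|); first by exists (0, 0) => //; exact: Hr.
      by exists (`|tau|, 0) => //; exact: Gabs.
    by rewrite s0 s1.
  by case => [[s' w] Cw /= es]; subst s'; exact: Gi sn0 Cw.
have Gall : forall s, G s.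
  apply: (archi_fill (c := `|tau|)) => //; first by rewrite normr_gt0.
  move=> s hs; have [s0|s0] := leP 0 s.
    by apply: Hint => //; rewrite -(ger0_norm s0).
  rewrite -(opprK s); apply: GN; apply: Hint; first by rewrite oppr_ge0 ltW.
  by rewrite -(ltr0_norm s0).
apply: Hall => p' q'.
have := (inv_shift HI (0, 0) (q'.1 - p'.1, q'.2 - p'.2) p'.2 p'.1).1 (Gall _ _).
by rewrite /= !add0r !subrK -!surjective_pairing.
Qed.

End Main.


Theorem theorem3 (R : realType) :
  (* (a) *)
  (is_equivalence (@S0 R) /\ nontrivial (@S0 R) /\ IGal_invariant (@S0 R) /\
   classes_meet_worldlines_at_most_once (@S0 R) /\
   (forall S : stpoint R -> stpoint R -> Prop,
      is_equivalence S -> nontrivial S -> IGal_invariant S ->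
      classes_meet_worldlines_at_most_once S -> same_relation S (@S0 R)))
  /\
  (* (b) *)
  (classes_connected (@S0 R) /\
   (forall S : stpoint R -> stpoint R -> Prop,
      is_equivalence S -> nontrivial S -> IGal_invariant S ->
      classes_connected S -> same_relation S (@S0 R))).
Proof.
have HE : is_equivalence (@S0 R).
  by split; [|split] => [p|p q|p q r] //; rewrite /S0 => ->.
have HI : IGal_invariant (@S0 R).
  by move=> Q v a b HQ p q; rewrite /S0 /igal_act /=; split => [e|/addIr //]; by rewrite e.
split; last split.
- split => //; split; last split => //; last split.
  + split.
      move=> h; have := h (0, 0) (1, 0); rewrite /S0 /= => /esym/eqP.
      by rewrite oner_eq0.
    move=> h; have := h (0, 0) (0, const_mx 1) erefl.
    move=> /(congr1 (fun p : stpoint R => p.2 0 0)) /=; rewrite !mxE => /esym/eqP.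
    by rewrite oner_eq0.
  + move=> W [I [f [_ [_ ->]]]] p q r e1 e2 [t _ eq] [t' _ er].
    subst q r; move: e1 e2; rewrite /eqclass /S0 /= => e1 e2.
    by rewrite -e1 -e2.
  + move=> S HSE HSnt HSI HW; apply: from_sub => //.
    exact: worldline_sub.
- move=> p.
  have -> : eqclass (@S0 R) p =
      \bigcup_(w in [set: 'cV[R]_3]) ((fun s : R => (p.1, s *: w)) @` `[0, 1]%classic).
    apply/seteqP; split.
      move=> [t x]; rewrite /eqclass /S0 /= => <-; exists x => //; exists 1; last by rewrite scale1r.
      by rewrite /= in_itv /= lexx ler01.
    by move=> q [w _ [s _ <-]].
  apply: bigcup_connected.
    exists (p.1, 0) => w _; exists 0; last by rewrite scale0r.
    by rewrite /= in_itv /= lexx ler01.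
  move=> w _; apply: connected_continuous_connected; first exact: segment_connected.
  apply: continuous_subspaceT => s.
  exact: (cvg_pair (cvg_cst p.1) (@scalel_continuous R _ w s)).
- move=> S HSE HSnt HSI HC; apply: from_sub => //.
  exact: connected_sub.
Qed.
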